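(* Let $T$ be a fractal CQCA on the spin-$1/2$ chain and let $P=\bigotimes\sigma_i$ be a finite tensor product of Pauli matrices different from the identity. Then for every $k\in\mathbb{N}$ there exists $m\in\mathbb{N}$ such that $T^m(P)$ is (a multiple of) a tensor product containing at least $k$ non-identity Pauli matrices.
   Context: A CQCA is an automorphism $T$ of $\bigotimes_{x\in\mathbb{Z}}M_2$ commuting with translations and mapping Pauli products to multiples of Pauli products; labelling Pauli products by $\xi\in\mathcal{P}^2$ ($\mathcal{P}$ = Laurent polynomials in $u$ over $\mathbb{Z}_2$) one has $T(W(\xi))\propto W(\mathbf{a}\xi)$ for a $2\times 2$ matrix $\mathbf{a}$ over $\mathcal{P}$. $T$ is centered if $\mathbf{a}$ has palindromic entries ($p(u^{-1})=p(u)$) and determinant $1$. A centered CQCA is fractal if $\mathbf{a}$ is neither periodic ($\mathbf{a}^p=\mathbb{1}$ for some $p\ge1$) nor has gliders (non-zero $\xi$ with $\mathbf{a}\xi=u^k\xi$ for some integer $k\neq0$). *)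

(* Defs.v *)
(* Laurent polynomials over Z_2 are modelled as the monoid
   algebra {malg 'F_2[int]} (from multinomials' monalg), where the exponent
   monoid is (int, +); we equip it with its (commutative) ring structure. *)
From HB Require Import structures.
From mathcomp Require Import all_boot all_order all_algebra.
From mathcomp Require Import finmap.
From mathcomp.multinomials Require Import monalg.
Set Implicit Arguments.
Unset Strict Implicit.
Unset Printing Implicit Defensive.
Import GRing.Theory.
Local Open Scope fset_scope.
Local Open Scope ring_scope.

Definition laurent : Type := {malg 'F_2[int]}.
HB.instance Definition _ := GRing.Zmodule.on laurent.

Section LaurentRing.
Implicit Types (g : laurent).

Definition upow (k : int) : laurent := << (1 : 'F_2) *g k >>.

Definition lmul g1 g2 : laurent :=
  \sum_(k1 <- msupp g1) \sum_(k2 <- msupp g2)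
     << g1@_k1 * g2@_k2 *g (k1 + k2)%R >>.

Definition lone : laurent := upow 0.

Lemma lmulr g1 g2 : lmul g1 g2 =
  \sum_(k2 <- msupp g2) \sum_(k1 <- msupp g1) << g1@_k1 * g2@_k2 *g (k1 + k2)%R >>.
Proof. by rewrite /lmul exchange_big. Qed.

Lemma lmulw (d1 d2 : {fset int}) g1 g2 :
  msupp g1 `<=` d1 -> msupp g2 `<=` d2 ->
  lmul g1 g2 = \sum_(k1 <- d1) \sum_(k2 <- d2) << g1@_k1 * g2@_k2 *g (k1 + k2)%R >>.
Proof.
move=> le_d1 le_d2; rewrite /lmul (big_fset_incl _ le_d1) /=.
  apply/eq_bigr=> k1 _; apply/big_fset_incl => // k _ /mcoeff_outdom ->.
  by rewrite mulr0 monalgU0.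
move=> k _ /mcoeff_outdom g1k.
by rewrite big1 => // k' _; rewrite g1k mul0r monalgU0.
Qed.

Lemma lmulUg c k g :
  lmul << c *g k >> g = \sum_(k' <- msupp g) << c * g@_k' *g (k + k')%R >>.
Proof.
rewrite (lmulw msuppU_le (fsubset_refl _)) big_seq_fset1.
by apply/eq_bigr => k' _; rewrite mcoeffUU.
Qed.

Lemma lmulgU c k g :
  lmul g << c *g k >> = \sum_(k' <- msupp g) << g@_k' * c *g (k' + k)%R >>.
Proof.
rewrite (lmulw (fsubset_refl _) msuppU_le).
by apply/eq_bigr=> k' _; rewrite big_seq_fset1 mcoeffUU.
Qed.

Lemma lmulUU c1 c2 k1 k2 :
  lmul << c1 *g k1 >> << c2 *g k2 >> = << c1 * c2 *g (k1 + k2)%R >>.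
Proof. by rewrite (lmulw msuppU_le msuppU_le) !big_seq_fset1 !mcoeffUU. Qed.

Lemma lmul0g : left_zero 0 lmul.
Proof. by move=> g; rewrite /lmul msupp0 big_seq_fset0. Qed.

Lemma lmulg0 : right_zero 0 lmul.
Proof. by move=> g; rewrite lmulr msupp0 big_seq_fset0. Qed.

Lemma lmul1g : left_id lone lmul.
Proof.
move=> g; rewrite /lone /upow lmulUg [RHS]monalgE.
by apply/eq_bigr=> kg _; rewrite mul1r add0r.
Qed.

Lemma lmulg1 : right_id lone lmul.
Proof.
move=> g; rewrite /lone /upow lmulgU [RHS]monalgE.
by apply/eq_bigr=> k _; rewrite mulr1 addr0.
Qed.

Lemma lmulgDl : left_distributive lmul +%R.
Proof.
move=> g1 g2 g.
rewrite [in RHS](@lmulw _ (msupp g) g1 g (fsubsetUl _ (msupp g2)) (fsubset_refl _)).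
rewrite [in RHS](@lmulw _ (msupp g) g2 g (fsubsetUr (msupp g1) _) (fsubset_refl _)).
rewrite (lmulw (msuppD_le _ _) (fsubset_refl _)).
rewrite -big_split /=; apply/eq_bigr=> k1 _.
rewrite -big_split /=; apply/eq_bigr=> k2 _.
by rewrite mcoeffD mulrDl monalgUD.
Qed.

Lemma lmulgDr : right_distributive lmul +%R.
Proof.
move=> g g1 g2.
rewrite [in RHS](@lmulw (msupp g) _ g g1 (fsubset_refl _) (fsubsetUl _ (msupp g2))).
rewrite [in RHS](@lmulw (msupp g) _ g g2 (fsubset_refl _) (fsubsetUr (msupp g1) _)).
rewrite (lmulw (fsubset_refl _) (msuppD_le _ _)).
rewrite -big_split /=; apply/eq_bigr=> k1 _.
rewrite -big_split /=; apply/eq_bigr=> k2 _.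
by rewrite mcoeffD mulrDr monalgUD.
Qed.

Lemma lmulEl1 g1 g2 :
  lmul g1 g2 = \sum_(k1 <- msupp g1) lmul << g1@_k1 *g k1 >> g2.
Proof. by apply/eq_bigr=> k _; rewrite lmulUg. Qed.

Lemma lmulEr1 g1 g2 :
  lmul g1 g2 = \sum_(k2 <- msupp g2) lmul g1 << g2@_k2 *g k2 >>.
Proof. by rewrite lmulr; apply/eq_bigr=> k _; rewrite lmulgU. Qed.

Lemma lmulA : associative lmul.
Proof.
move=> g1 g2 g3.
rewrite [RHS](big_morph (lmul^~ _) (fun _ _ => lmulgDl _ _ _) (lmul0g _)).
rewrite lmulEl1; apply/eq_bigr=> k1 _.
rewrite [LHS](big_morph (lmul _) (fun _ _ => lmulgDr _ _ _) (lmulg0 _)).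
rewrite [RHS](big_morph (lmul^~ _) (fun _ _ => lmulgDl _ _ _) (lmul0g _)).
apply/eq_bigr=> k2 _.
rewrite [LHS](big_morph (lmul _) (fun _ _ => lmulgDr _ _ _) (lmulg0 _)).
by rewrite lmulEr1; apply/eq_bigr=> k3 _; rewrite !lmulUU mulrA addrA.
Qed.

Lemma lone_neq0 : lone != 0.
Proof.
apply/eqP/malgP=> /(_ 0%R) /eqP.
by rewrite mcoeffUU mcoeff0 oner_eq0.
Qed.

Lemma lmulC : commutative lmul.
Proof.
move=> g1 g2; rewrite /lmul [RHS]exchange_big /=.
by apply/eq_bigr=> k1 _; apply/eq_bigr=> k2 _; rewrite mulrC addrC.
Qed.

End LaurentRing.

HB.instance Definition _ := GRing.Zmodule_isComNzRing.Build laurent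
  lmulA lmulC lmul1g lmulgDl lone_neq0.

Definition palindromic (p : laurent) : Prop :=
  forall n : int, p@_n = p@_(- n).

(* The CQCA is described by its 2x2 matrix a over P, acting on Pauli
   labels xi in P^2 (column vectors): T(W(xi)) ~ W(a xi). *)
Definition centered (a : 'M[laurent]_2) : Prop :=
  (forall i j, palindromic (a i j)) /\ \det a = 1.

Definition periodic (a : 'M[laurent]_2) : Prop :=
  exists p : nat, (0 < p)%N /\ a ^+ p = 1.

Definition has_glider (a : 'M[laurent]_2) : Prop :=
  exists (xi : 'cV[laurent]_2) (k : int),
    xi != 0 /\ k != 0 /\ a *m xi = upow k *: xi.

Definition fractal (a : 'M[laurent]_2) : Prop :=
  centered a /\ ~ periodic a /\ ~ has_glider a.

(* Number of non-identity tensor factors of the Pauli product W(xi):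
   site x carries a non-identity Pauli iff the u^x coefficient of
   xi_1 or of xi_2 is non-zero. *)
Definition pauli_weight (xi : 'cV[laurent]_2) : nat :=
  #|` fsetU (msupp (xi 0 0)) (msupp (xi 1 0)) |.

(* Main.v *)
Require Import Defs.
From HB Require Import structures.
From mathcomp Require Import all_boot all_order all_algebra.
From mathcomp Require Import finmap.
From mathcomp.multinomials Require Import monalg.
From mathcomp Require Import ring zify.
From Stdlib Require Import Classical.
Set Implicit Arguments.
Unset Strict Implicit.
Unset Printing Implicit Defensive.
Import GRing.Theory.
Local Open Scope fset_scope.
Local Open Scope ring_scope.

Lemma F2_cases (c : 'F_2) : c = 0 \/ c = 1.
Proof. case: c => [[|[|//]]] ? ; [left|right]; exact/val_inj. Qed.
Lemma F2_addxx (c : 'F_2) : c + c = 0.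
Proof. by case: (F2_cases c) => ->; rewrite ?addr0 //; exact/val_inj. Qed.
Lemma upow0 : upow 0 = 1. Proof. by []. Qed.
Lemma upowD (i j : int) : upow (i + j) = upow i * upow j.
Proof. by rewrite /upow /= [_ * _]lmulUU mulr1. Qed.
Lemma upowN (i : int) : upow (- i) * upow i = 1.
Proof. by rewrite -upowD addNr. Qed.
Lemma laddxx (f : laurent) : f + f = 0.
Proof. by apply/malgP => k; rewrite mcoeffD mcoeff0 F2_addxx. Qed.
Lemma loppE (f : laurent) : - f = f.
Proof. by apply: (addrI f); rewrite addrN laddxx. Qed.

Lemma sum_neq0 (V : zmodType) (I : eqType) (s : seq I) (F : I -> V) :
  \sum_(i <- s) F i != 0 -> exists2 i, i \in s & F i != 0.
Proof.
elim: s => [|x s IH]; first by rewrite big_nil eqxx.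
rewrite big_cons; case: (eqVneq (F x) 0) => [->|Fx]; last first.
  by move=> _; exists x; rewrite ?mem_head.
by rewrite add0r => /IH [i Hi Fi]; exists i; rewrite ?inE ?Hi ?orbT.
Qed.

Lemma mcoeff_upowM (k n : int) (f : laurent) : (upow k * f)@_n = f@_(n - k).
Proof.
rewrite [_ * _]lmulUg raddf_sum /=.
have [Hin|Hout] := boolP (n - k \in msupp f).
  rewrite (big_fsetD1 (n - k)) //= mcoeffU mul1r.
  rewrite big1_fset ?addr0; first by rewrite (addrC k) subrK eqxx mulr1n.
  move=> k' /fsetD1P [Hk' _] _.
  rewrite mcoeffU; case: eqP => // Hn; exfalso; move: Hk'.
  by rewrite -Hn addrC addKr eqxx.
rewrite (mcoeff_outdom Hout) big1_fset // => k' Hk' _.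
rewrite mcoeffU; case: eqP => // Hn; exfalso; move: Hout.
by rewrite -Hn addrC addKr Hk'.
Qed.

Lemma msupp_upowM (k n : int) (f : laurent) :
  (n \in msupp (upow k * f)) = (n - k \in msupp f).
Proof. by rewrite -!mcoeff_neq0 mcoeff_upowM. Qed.

Lemma msuppM (f g : laurent) n : n \in msupp (f * g) ->
  exists k1, exists k2, [/\ k1 \in msupp f, k2 \in msupp g & n = k1 + k2].
Proof.
rewrite -mcoeff_neq0 [_ * _]/(lmul f g) raddf_sum /= => /sum_neq0 [k1 H1].
rewrite (raddf_sum (mcoeff n)) /= => /sum_neq0 [k2 H2]; rewrite mcoeffU.
case: (k1 + k2 =P n) => [<- _|]; last by rewrite mulr0n eqxx.
by exists k1, k2.
Qed.


Lemma X_div (p : {poly 'F_2}) N : p %| 'X^N -> exists k, p = 'X^k.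
Proof.
have -> : ('X^N : {poly 'F_2}) = ('X - 0%:P) ^+ N by rewrite subr0.
case/dvdp_exp_XsubCP => k _; rewrite subr0 => /eqpP [[c1 c2] /= /andP [H1 H2]].
case: (F2_cases c1) H1 => -> // _; case: (F2_cases c2) H2 => -> // _.
by rewrite !scale1r => ->; exists k.
Qed.

Lemma poly_root_lemma (N : nat) (C R T : {poly 'F_2}) : R != 0 ->
  'X^N * (C^+2 + R^+2) + T * C * R = 0 -> exists i j, C * 'X^j = R * 'X^i.
Proof.
move=> R0 E.
set g := gcdp C R.
have g0 : g != 0 by rewrite gcdp_eq0 negb_and R0 orbT.
set C1 := C %/ g; set R1 := R %/ g.
have HC : C = C1 * g by rewrite divpK // dvdp_gcdl.
have HR : R = R1 * g by rewrite divpK // dvdp_gcdr.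
have cop : coprimep C1 R1 by apply: coprimep_div_gcd; rewrite R0 orbT.
have E1 : 'X^N * (C1^+2 + R1^+2) + T * C1 * R1 = 0.
  have : g ^+ 2 * ('X^N * (C1^+2 + R1^+2) + T * C1 * R1) = 0.
    by rewrite -E HC HR; ring.
  by move/eqP; rewrite mulf_eq0 expf_eq0 (negbTE g0) andbF /= => /eqP.
have D1 : C1 %| 'X^N.
  rewrite -(Gauss_dvdpl _ (coprimep_expr 2 cop)).
  have -> : 'X^N * R1 ^+ 2 = - ('X^N * C1^+2 + T * C1 * R1).
    by apply/eqP; rewrite -subr_eq0 opprK -E1; apply/eqP; ring.
  rewrite dvdpNr dvdp_add //; first by apply: dvdp_mull; rewrite exprS dvdp_mulIl.
  by apply: dvdp_mulr; apply: dvdp_mulIr.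
have D2 : R1 %| 'X^N.
  rewrite -(Gauss_dvdpl _ (coprimep_expr 2 (etrans (coprimep_sym _ _) cop))).
  have -> : 'X^N * C1 ^+ 2 = - ('X^N * R1^+2 + T * C1 * R1).
    by apply/eqP; rewrite -subr_eq0 opprK -E1; apply/eqP; ring.
  rewrite dvdpNr dvdp_add //; first by apply: dvdp_mull; rewrite exprS dvdp_mulIl.
  exact: dvdp_mulIr.
case: (X_div D1) => i Hi; case: (X_div D2) => j Hj.
by exists i, j; rewrite HC HR Hi Hj; ring.
Qed.

Definition phi (p : {poly 'F_2}) : laurent :=
  \sum_(i < size p) << p`_i *g (i%:Z) >>.

Lemma phi_coef p n : (phi p)@_n = if n is Posz m then p`_m else 0.
Proof.
rewrite /phi raddf_sum /=.
case: n => [m|m]; last first.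
  by rewrite big1 // => i _; rewrite mcoeffU.
case: (ltnP m (size p)) => Hm.
  rewrite (bigD1 (Ordinal Hm)) //= mcoeffU eqxx mulr1n big1 ?addr0 // => i Hi.
  rewrite mcoeffU; case: eqP => // [[Him]]; exfalso; move: Hi.
  by apply/negP; rewrite negbK; apply/eqP/val_inj.
rewrite nth_default // big1 // => i _; rewrite mcoeffU; case: eqP => // [[Him]].
by move: (ltn_ord i); rewrite Him ltnNge Hm.
Qed.

Lemma phiD p q : phi (p + q) = phi p + phi q.
Proof. by apply/malgP => n; rewrite mcoeffD !phi_coef; case: n => [m|m]; rewrite ?coefD ?addr0. Qed.
Lemma phi0 : phi 0 = 0.
Proof. by apply/malgP => n; rewrite mcoeff0 phi_coef; case: n => [m|m]; rewrite ?coef0. Qed.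
Lemma phi_inj p q : phi p = phi q -> p = q.
Proof. move=> H; apply/polyP => i; by have := congr1 (mcoeff (Posz i)) H; rewrite !phi_coef. Qed.
Lemma phi_sum (I : Type) (s : seq I) (F : I -> {poly 'F_2}) :
  phi (\sum_(i <- s) F i) = \sum_(i <- s) phi (F i).
Proof. exact: (big_morph phi phiD phi0). Qed.
Lemma phi_mono c i : phi (c *: 'X^i) = << c *g (i%:Z) >>.
Proof.
apply/malgP => n; rewrite phi_coef mcoeffU; case: n => [m|m] //.
by rewrite coefZ coefXn; case: eqVneq => [->|/negbTE Hn]; rewrite ?eqxx ?mulr1 ?mulr0 //; case: eqP => // [[]] /esym/eqP; rewrite Hn.
Qed.
Lemma phiM p q : phi (p * q) = phi p * phi q.
Proof.
rewrite -[p]coefK -[q]coefK !poly_def big_distrl /= phi_sum.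
rewrite [phi (\sum_(i < _) _)]phi_sum [phi (\sum_(i < size q) _)]phi_sum big_distrl /=.
apply: eq_bigr => i _; rewrite big_distrr phi_sum big_distrr /=.
apply: eq_bigr => j _.
rewrite -scalerAl -scalerAr scalerA -exprD phi_mono !phi_mono.
by rewrite [RHS]lmulUU PoszD.
Qed.

Lemma phiX d : phi 'X^d = upow d.
Proof. by rewrite -[_ ^+ _]scale1r phi_mono. Qed.

Lemma laurent_rep f : exists N : nat, exists F, f = upow (- N%:Z) * phi F.
Proof.
rewrite [f]monalgE; apply: (big_ind (fun x => exists N : nat, exists F, x = upow (- N%:Z) * phi F)).
- by exists 0%N, 0; rewrite phi0 mulr0.
- move=> x y [N1 [F1 ->]] [N2 [F2 ->]]; exists (N1 + N2)%N, ('X^N2 * F1 + 'X^N1 * F2).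
  rewrite phiD !phiM !phiX mulrDr !mulrA -!upowD PoszD.
  have e1 : - (N1 + N2)%:Z + N2%:Z = - N1%:Z by rewrite PoszD; ring.
  have e2 : - (N1 + N2)%:Z + N1%:Z = - N2%:Z by rewrite PoszD; ring.
  by rewrite e1 e2.
- move=> k _; case: k => [m|m].
    by exists 0%N, (f@_(Posz m) *: 'X^m); rewrite phi_mono mul1r.
  exists m.+1, (f@_(Negz m) *: 'X^0); rewrite phi_mono [_ * _]lmulUU mul1r addr0.
  by rewrite NegzE.
Qed.


Lemma laurent_rep_lift f N F N' : (N <= N')%N -> f = upow (- N%:Z) * phi F ->
  f = upow (- N'%:Z) * phi ('X^(N' - N) * F).
Proof.
move=> HN ->; rewrite phiM phiX mulrA -upowD.
have -> : - N'%:Z + (N' - N)%N%:Z = - N%:Z by lia.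
by [].
Qed.

Lemma laurent_domain (f g : laurent) : f * g = 0 -> f = 0 \/ g = 0.
Proof.
case: (laurent_rep f) => N [F ->]; case: (laurent_rep g) => M [G ->] H.
have : phi (F * G) = 0.
  have E : (upow N%:Z * upow M%:Z) * ((upow (- N%:Z) * phi F) * (upow (- M%:Z) * phi G)) = phi F * phi G.
    transitivity ((upow (- N%:Z) * upow N) * (upow (- M%:Z) * upow M) * (phi F * phi G)); first by ring.
    by rewrite !upowN !mul1r.
  by rewrite phiM -E H mulr0.
rewrite -phi0 => /phi_inj /eqP; rewrite mulf_eq0 => /orP [] /eqP ->; rewrite phi0 mulr0; by [left|right].
Qed.

Lemma laurent_root (c Q t : laurent) : Q != 0 ->
  c ^+ 2 + t * Q * c + Q ^+ 2 = 0 -> exists k, c = upow k * Q.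
Proof.
move=> Q0 E.
case: (laurent_rep c) => Nc [C Hc]; case: (laurent_rep Q) => NQ [R HR].
case: (laurent_rep t) => Nt [T HT].
pose N := (Nc + NQ + Nt)%N.
move: (laurent_rep_lift (N' := N) (leq_trans (leq_addr NQ _) (leq_addr Nt _)) Hc) => {}Hc.
move: (laurent_rep_lift (N' := N) (leq_trans (leq_addl Nc _) (leq_addr Nt _)) HR) => {}HR.
move: (laurent_rep_lift (N' := N) (leq_addl _ Nt) HT) => {}HT.
move: Hc HR HT; set C' := _ * C; set R' := _ * R; set T' := _ * T => Hc HR HT.
clearbody C' R' T'.
have UV : upow N%:Z * upow (- N%:Z) = 1 by rewrite mulrC upowN.
have R0 : R' != 0.
  by apply: contraNneq Q0 => H; rewrite HR H phi0 mulr0.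
have EP : 'X^N * (C' ^+ 2 + R' ^+ 2) + T' * C' * R' = 0.
  apply: phi_inj; rewrite phi0 phiD !phiM phiD !phiM phiX.
  transitivity (upow N%:Z ^+ 3 * (c ^+ 2 + t * Q * c + Q ^+ 2)); last by rewrite E mulr0.
  rewrite Hc HR HT.
  transitivity ((upow N%:Z * upow (- N%:Z)) ^+ 2 * upow N%:Z * (phi C' * phi C' + phi R' * phi R')
     + (upow N%:Z * upow (- N%:Z)) ^+ 3 * (phi T' * phi C' * phi R')); last by ring.
  by rewrite UV !expr1n !mul1r.
case: (poly_root_lemma R0 EP) => i [j Hij].
exists (i%:Z - j%:Z).
have Hp := congr1 phi Hij; rewrite !phiM !phiX in Hp.
have UVj : upow j%:Z * upow (- j%:Z) = 1 by rewrite mulrC upowN.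
rewrite Hc HR.
transitivity (upow (- N%:Z) * (phi C' * upow j%:Z) * upow (- j%:Z)).
  transitivity (upow (- N%:Z) * phi C' * (upow j%:Z * upow (- j%:Z))); first by rewrite UVj mulr1.
  by ring.
rewrite Hp upowD; ring.
Qed.

Definition supp (v : 'cV[laurent]_2) : {fset int} := msupp (v 0 0) `|` msupp (v 1 0).
Lemma weightE v : pauli_weight v = #|` supp v|. Proof. by []. Qed.

Lemma ord2_cases (i : 'I_2) : i = 0 \/ i = 1.
Proof. case: i => [[|[|//]]] ?; [left|right]; exact/val_inj. Qed.
Lemma ord1_eq0 (j : 'I_1) : j = 0.
Proof. by case: j => [[|//]] ?; exact/val_inj. Qed.

Lemma vec_eq (v w : 'cV[laurent]_2) : v 0 0 = w 0 0 -> v 1 0 = w 1 0 -> v = w.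
Proof.
move=> H0 H1; apply/matrixP => i j; rewrite (ord1_eq0 j).
by case: (ord2_cases i) => ->.
Qed.

Lemma in_supp v n : (n \in supp v) = (n \in msupp (v 0 0)) || (n \in msupp (v 1 0)).
Proof. by rewrite inE. Qed.

Lemma supp_eq0 v : (supp v == fset0) = (v == 0).
Proof.
apply/eqP/eqP => [H|->]; last by rewrite /supp !mxE msupp0 fsetU0.
have Z : forall f : laurent, (forall n, n \notin msupp f) -> f = 0.
  by move=> f Hf; apply/malgP => n; rewrite mcoeff0 mcoeff_outdom.
apply: vec_eq; rewrite mxE; apply: Z => n; apply/negP => Hn;
  by have := in_fset0 n; rewrite -H in_supp Hn ?orbT.
Qed.

Lemma weight_gt0 v : v != 0 -> (0 < pauli_weight v)%N.
Proof. by rewrite weightE cardfs_gt0 -supp_eq0. Qed.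

Lemma in_supp_scale k v n : (n \in supp (upow k *: v)) = (n - k \in supp v).
Proof. by rewrite !in_supp !mxE !msupp_upowM. Qed.

Lemma weight_scale k v : pauli_weight (upow k *: v) = pauli_weight v.
Proof.
rewrite !weightE.
have -> : supp (upow k *: v) = (fun i => i + k) @` supp v.
  apply/fsetP => n; rewrite in_supp_scale; apply/idP/imfsetP => [H|[i Hi ->]].
    by exists (n - k); rewrite // subrK.
  by rewrite addrK.
by rewrite card_imfset //= => x y /addIr.
Qed.

Definition res (P : pred int) (f : laurent) : laurent :=
  [malg k in msupp f => if P k then f@_k else 0].

Lemma res_coef P f n : (res P f)@_n = if P n then f@_n else 0.
Proof.
rewrite /res mcoeffE; case: ifP => // Hn.
by case: (P n) => //; rewrite mcoeff_outdom // Hn.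
Qed.

Lemma res_split P f : f = res P f + res (predC P) f.
Proof. by apply/malgP => n; rewrite mcoeffD !res_coef /=; case: (P n); rewrite ?addr0 ?add0r. Qed.

Lemma in_msupp_res P f n : (n \in msupp (res P f)) = P n && (n \in msupp f).
Proof. by rewrite -!mcoeff_neq0 res_coef; case: (P n); rewrite ?eqxx. Qed.

Definition vres (P : pred int) (v : 'cV[laurent]_2) : 'cV[laurent]_2 := map_mx (res P) v.

Lemma in_supp_vres P v n : (n \in supp (vres P v)) = P n && (n \in supp v).
Proof. by rewrite !in_supp !mxE !in_msupp_res; case: (P n). Qed.

Lemma vres_split P v : v = vres P v + vres (predC P) v.
Proof. by apply/matrixP => i j; rewrite !mxE -res_split. Qed.

Lemma in_msuppD_l (f g : laurent) n : n \in msupp f -> n \notin msupp g -> n \in msupp (f + g).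
Proof. by rewrite -!mcoeff_neq0 negbK mcoeffD => H /eqP ->; rewrite addr0. Qed.

Lemma weight_disj v w : (forall n, n \in supp v -> n \notin supp w) ->
  (pauli_weight v + pauli_weight w <= pauli_weight (v + w))%N.
Proof.
move=> D; rewrite !weightE -cardfsUI.
have -> : supp v `&` supp w = fset0.
  apply/fsetP => n; rewrite inE in_fset0; apply/negP => /andP [H1 H2].
  by move: (D _ H1); rewrite H2.
rewrite cardfs0 addn0; apply: fsubset_leq_card; apply/fsubsetP => n.
rewrite in_fsetU => /orP [H|H].
- move: (D _ H); rewrite !in_supp !mxE negb_or => /andP [H0 H1].
  move: H; rewrite in_supp => /orP [H|H];
    [by rewrite (in_msuppD_l H H0) | by rewrite (in_msuppD_l H H1) orbT].
- have H' : n \notin supp v by apply: contraTN H => /D.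
  move: H'; rewrite !in_supp !mxE negb_or => /andP [H0 H1].
  move: H; rewrite in_supp => /orP [H|H];
    [by rewrite addrC (in_msuppD_l H H0) | by rewrite (addrC (v 1 0)) (in_msuppD_l H H1) orbT].
Qed.

Lemma seq_bound (s : seq int) : exists r : nat, forall k, k \in s -> - (r%:Z) <= k <= r%:Z.
Proof.
elim: s => [|k0 s [r Hr]]; first by exists 0%N.
exists (r + absz k0)%N => k; rewrite inE => /orP [/eqP ->|/Hr]; lia.
Qed.

Lemma mx_radius (a : 'M[laurent]_2) : exists r : nat,
  forall i j k, k \in msupp (a i j) -> - (r%:Z) <= k <= r%:Z.
Proof.
case: (seq_bound (msupp (a 0 0) `|` msupp (a 0 1) `|` msupp (a 1 0) `|` msupp (a 1 1))) => r Hr.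
exists r => i j k Hk; apply: Hr.
by case: (ord2_cases i) Hk => ->; case: (ord2_cases j) => -> Hk; rewrite !inE Hk ?orbT.
Qed.

Lemma in_msupp_sum (I : eqType) (s : seq I) (F : I -> laurent) n :
  n \in msupp (\sum_(i <- s) F i) -> exists2 i, i \in s & n \in msupp (F i).
Proof.
by rewrite -mcoeff_neq0 raddf_sum => /sum_neq0 [i Hi Hn]; exists i; rewrite // -mcoeff_neq0.
Qed.

Lemma loc1 (a : 'M[laurent]_2) (r : nat)
  (Hr : forall i j k, k \in msupp (a i j) -> - (r%:Z) <= k <= r%:Z) v n :
  n \in supp (a *m v) -> exists q, q \in supp v /\ q - r%:Z <= n <= q + r%:Z.
Proof.
have H : forall i, n \in msupp ((a *m v) i 0) -> exists q, q \in supp v /\ q - r%:Z <= n <= q + r%:Z.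
  move=> i; rewrite mxE => /in_msupp_sum [j _] /msuppM [k1 [k2 [H1 H2 ->]]].
  exists k2; split.
    by rewrite in_supp; case: (ord2_cases j) H2 => -> ->; rewrite ?orbT.
  by move: (Hr _ _ _ H1); lia.
by rewrite in_supp => /orP [] /H.
Qed.

Lemma locm (a : 'M[laurent]_2) (r : nat)
  (Hr : forall i j k, k \in msupp (a i j) -> - (r%:Z) <= k <= r%:Z) m v n :
  n \in supp ((a ^+ m) *m v) -> exists q, q \in supp v /\ q - (r * m)%N%:Z <= n <= q + (r * m)%N%:Z.
Proof.
elim: m n => [|m IH] n.
  by rewrite expr0 mul1mx => Hn; exists n; split => //; lia.
rewrite exprS -mulmxA => /(loc1 Hr) [p [Hp Hnp]].
case: (IH _ Hp) => q [Hq Hpq]; exists q; split => //.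
rewrite mulnS; lia.
Qed.

Lemma two0 : (1 + 1 : laurent) = 0. Proof. exact: laddxx. Qed.
Lemma char2_eq (x y : laurent) : x + y = 0 -> x = y.
Proof. by move=> H; apply/eqP; rewrite -subr_eq0 loppE H. Qed.

Lemma l01 : lift ord0 (ord0 : 'I_1) = 1 :> 'I_2. Proof. exact: val_inj. Qed.
Lemma o0 : ord0 = 0 :> 'I_2. Proof. exact: val_inj. Qed.

Lemma mulmx_col (A : 'M[laurent]_2) (v : 'cV[laurent]_2) i :
  (A *m v) i 0 = A i 0 * v 0 0 + A i 1 * v 1 0.
Proof. by rewrite mxE big_ord_recl big_ord_recl big_ord0 addr0 l01 o0. Qed.

Lemma mulmx_ent (A B : 'M[laurent]_2) i j :
  (A *m B) i j = A i 0 * B 0 j + A i 1 * B 1 j.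
Proof. by rewrite mxE big_ord_recl big_ord_recl big_ord0 addr0 l01 o0. Qed.

Lemma l01' : lift ord0 (0 : 'I_1) = 1 :> 'I_2. Proof. exact: val_inj. Qed.
Lemma l10 : lift (1 : 'I_2) (0 : 'I_1) = 0 :> 'I_2. Proof. exact: val_inj. Qed.

Lemma det2 (A : 'M[laurent]_2) : \det A = A 0 0 * A 1 1 + A 0 1 * A 1 0.
Proof.
rewrite (expand_det_row A ord0) big_ord_recl big_ord_recl big_ord0.
rewrite l01 /cofactor !det_mx11 !mxE l01' l10.
have -> : ((ord0 : 'I_2) + (ord0 : 'I_2))%N = 0%N by [].
have -> : (nat_of_ord (ord0 : 'I_2) + nat_of_ord (1%R : 'I_2))%N = 1%N by [].
rewrite expr0 expr1 mul1r mulN1r loppE o0.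
by rewrite [_ + 0]addr0.
Qed.

Definition tr2 (a : 'M[laurent]_2) := a 0 0 + a 1 1.

Lemma CH_ent (a : 'M[laurent]_2) : \det a = 1 -> forall i j,
  (a *m a) i j = tr2 a * a i j + (i == j)%:R.
Proof.
rewrite det2 /tr2 => Hd i j; rewrite mulmx_ent.
have n01 : (0 == 1 :> 'I_2) = false by [].
have n10 : (1 == 0 :> 'I_2) = false by [].
case: (ord2_cases i) => ->; case: (ord2_cases j) => ->;
  rewrite ?eqxx ?n01 ?n10 ?[true%:R]mulr1n ?[false%:R]mulr0n ?[_ + 0]addr0.
- apply: char2_eq; rewrite -Hd.
  transitivity ((1 + 1) * (a 0 0 * a 0 0 + a 0 1 * a 1 0 + a 0 0 * a 1 1)); first by ring.
  by rewrite two0 mul0r.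
- ring.
- ring.
- apply: char2_eq; rewrite -Hd.
  transitivity ((1 + 1) * (a 1 1 * a 1 1 + a 0 1 * a 1 0 + a 0 0 * a 1 1)); first by ring.
  by rewrite two0 mul0r.
Qed.

Lemma CH (a : 'M[laurent]_2) : \det a = 1 -> a * a = tr2 a *: a + 1.
Proof.
move=> Hd; apply/matrixP => i j.
have -> : (a * a) i j = (a *m a) i j by [].
rewrite (CH_ent Hd) mxE [(tr2 a *: a) i j]mxE; congr (_ + _).
have -> : (1 : 'M[laurent]_2) = 1%:M by [].
by rewrite mxE.
Qed.

Lemma mx_addxx (M : 'M[laurent]_2) : M + M = 0.
Proof. by apply/matrixP => i j; rewrite !mxE laddxx. Qed.

Definition ainv (a : 'M[laurent]_2) := tr2 a *: (1%:M : 'M[laurent]_2) + a.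

Lemma ainvK (a : 'M[laurent]_2) : \det a = 1 -> ainv a * a = 1.
Proof.
move=> Hd; rewrite /ainv mulrDl (CH Hd).
have -> : tr2 a *: (1%:M : 'M[laurent]_2) * a = tr2 a *: a.
  by rewrite -scalerAl; congr (_ *: _); apply: mul1mx.
by rewrite addrA mx_addxx add0r.
Qed.

Lemma ainv_powK (a : 'M[laurent]_2) m : \det a = 1 -> ainv a ^+ m * a ^+ m = 1.
Proof.
move=> Hd; elim: m => [|m IH]; first by rewrite !expr0 mulr1.
by rewrite exprSr exprS mulrA -(mulrA (ainv a ^+ m)) ainvK // mulr1 IH.
Qed.

Lemma pow_inj (a : 'M[laurent]_2) m (v : 'cV[laurent]_2) : \det a = 1 -> (a ^+ m) *m v = 0 -> v = 0.
Proof.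
move=> Hd H.
have : (ainv a ^+ m * a ^+ m) *m v = 0 by rewrite -mulmxA H mulmx0.
by rewrite ainv_powK // mul1mx.
Qed.

Lemma det_pow (a : 'M[laurent]_2) m : \det a = 1 -> \det (a ^+ m) = 1.
Proof.
move=> Hd; elim: m => [|m IH]; first by rewrite expr0; exact: (det1 laurent 2).
by rewrite exprS detM Hd IH mulr1.
Qed.

Lemma pow_form (a : 'M[laurent]_2) m : \det a = 1 ->
  exists Q P : laurent, a ^+ m = Q *: a + P%:M.
Proof.
move=> Hd; elim: m => [|m [Q [P HQP]]].
  by exists 0, 1; rewrite expr0 scale0r add0r.
exists (Q * tr2 a + P), Q.
rewrite exprS HQP mulrDr -scalerAr (CH Hd).
have -> : a * P%:M = P *: a by apply: mul_mx_scalar.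
by rewrite scalerDr scalerA scalemx1 scalerDl addrAC.
Qed.

Lemma scaleE (c : laurent) (v : 'cV[laurent]_2) i : (c *: v) i 0 = c * v i 0.
Proof. by rewrite mxE. Qed.

Lemma powform_act (a : 'M[laurent]_2) Q P (y : 'cV[laurent]_2) i :
  ((Q *: a + P%:M) *m y) i 0 = Q * (a *m y) i 0 + P * y i 0.
Proof. by rewrite mulmxDl -scalemxAl mul_scalar_mx mxE !scaleE. Qed.

Lemma vec_nz (y : 'cV[laurent]_2) : y != 0 -> exists i, y i 0 != 0.
Proof.
move=> Hy; case: (eqVneq (y 0 0) 0) => H0; last by exists 0.
case: (eqVneq (y 1 0) 0) => H1; last by exists 1.
have : y = 0 by apply: vec_eq; rewrite mxE.
by move=> E; rewrite E eqxx in Hy.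
Qed.

Lemma dom_l (x y : laurent) : x != 0 -> x * y = 0 -> y = 0.
Proof. by move=> Hx /laurent_domain [H|//]; rewrite H eqxx in Hx. Qed.

Lemma CH_vec (a : 'M[laurent]_2) (y : 'cV[laurent]_2) i : \det a = 1 ->
  (a *m (a *m y)) i 0 = tr2 a * (a *m y) i 0 + y i 0.
Proof.
move=> Hd; rewrite mulmxA.
have -> : a *m a = a * a by [].
rewrite (CH Hd) mulmxDl -scalemxAl mul1mx mxE scaleE.
by [].
Qed.

Lemma eigen_case (a : 'M[laurent]_2) (Hd : \det a = 1) (y : 'cV[laurent]_2) (i : 'I_2)
  (Hyi : y i 0 != 0) (HD : y 0 0 * (a *m y) 1 0 = y 1 0 * (a *m y) 0 0) :
  exists k, a *m y = upow k *: y.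
Proof.
have H1 : forall j, y i 0 * (a *m y) j 0 = (a *m y) i 0 * y j 0.
  move=> j; case: (ord2_cases i) => ->; case: (ord2_cases j) => ->;
  first [exact: mulrC | rewrite HD; exact: mulrC | rewrite -HD; exact: mulrC].
have E1 : y i 0 * (a *m (a *m y)) i 0 = (a *m y) i 0 * (a *m y) i 0.
  transitivity (a i 0 * (y i 0 * (a *m y) 0 0) + a i 1 * (y i 0 * (a *m y) 1 0)).
    rewrite [(a *m (a *m y)) i 0]mulmx_col; ring.
  rewrite !H1; transitivity ((a *m y) i 0 * (a i 0 * y 0 0 + a i 1 * y 1 0)); first by ring.
  by rewrite -mulmx_col.
have E2 : y i 0 * (a *m (a *m y)) i 0 = tr2 a * y i 0 * (a *m y) i 0 + y i 0 ^+ 2.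
  rewrite (CH_vec _ _ Hd); ring.
have Eq : (a *m y) i 0 ^+ 2 + tr2 a * y i 0 * (a *m y) i 0 + y i 0 ^+ 2 = 0.
  transitivity ((a *m y) i 0 * (a *m y) i 0 + y i 0 * (a *m (a *m y)) i 0); first by rewrite E2; ring.
  by rewrite E1 laddxx.
case: (laurent_root Hyi Eq) => k Hk; exists k.
apply: vec_eq; rewrite scaleE; apply/eqP; rewrite -subr_eq0; apply/eqP; apply: (dom_l Hyi).
  by rewrite mulrBr H1 Hk mulrA [y i 0 * _]mulrC subrr.
by rewrite mulrBr H1 Hk mulrA [y i 0 * _]mulrC subrr.
Qed.

Lemma no_return (a : 'M[laurent]_2) (Hf : fractal a) (y : 'cV[laurent]_2) (Hy : y != 0)
  (p : nat) (s : int) (Hp : (0 < p)%N) (E : a ^+ p *m y = upow s *: y) : False.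
Proof.
case: Hf => [[Hpal Hd] [Hper Hgl]].
case: (eqVneq (y 0 0 * (a *m y) 1 0) (y 1 0 * (a *m y) 0 0)) => HD.
- case: (vec_nz Hy) => i Hi; case: (eigen_case Hd Hi HD) => k Hk.
  case: (eqVneq k 0) => Hk0; last first.
    by apply: Hgl; exists y, k; split; [exact: Hy | split; [exact: Hk0 | exact: Hk]].
  rewrite Hk0 upow0 scale1r in Hk.
  have Ht : tr2 a = 0.
    have H : ainv a *m (a *m y) = y.
      rewrite mulmxA; have -> : ainv a *m a = 1 by exact: (ainvK Hd).
      exact: mul1mx.
    rewrite Hk /ainv mulmxDl -scalemxAl mul1mx Hk in H.
    have H2 : tr2 a *: y = 0.
      by have := congr1 (fun v => v - y) H; rewrite addrK subrr.
    have := congr1 (fun v : 'cV[laurent]_2 => v i 0) H2; rewrite scaleE mxE => H3.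
    by case: (laurent_domain H3) => // H4; rewrite H4 eqxx in Hi.
  apply: Hper; exists 2%N; split; first by [].
  by rewrite expr2 (CH Hd) Ht scale0r add0r.
- case: (pow_form p Hd) => Q [P HQP].
  have Hc : forall i, Q * (a *m y) i 0 = (upow s - P) * y i 0.
    move=> i; have := congr1 (fun v : 'cV[laurent]_2 => v i 0) E; rewrite HQP powform_act scaleE => H.
    by rewrite mulrBl -H addrK.
  have HQ : Q = 0.
    have HD' : y 0 0 * (a *m y) 1 0 - y 1 0 * (a *m y) 0 0 != 0 by rewrite subr_eq0.
    apply: (dom_l HD').
    transitivity (y 0 0 * (Q * (a *m y) 1 0) - y 1 0 * (Q * (a *m y) 0 0)); first by ring.
    rewrite !Hc; ring.
  have HP : P = upow s.
    case: (vec_nz Hy) => i Hi; have := Hc i; rewrite HQ mul0r => /esym H.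
    case: (laurent_domain H) => [H'|H']; last by rewrite H' eqxx in Hi.
    by apply/eqP; rewrite eq_sym -subr_eq0 H'.
  have Hap : a ^+ p = (upow s)%:M by rewrite HQP HQ HP scale0r add0r.
  have Hu2 : upow s ^+ 2 = 1.
    by have := det_pow p Hd; rewrite Hap det_scalar.
  apply: Hper; exists (p * 2)%N; split; first by rewrite muln_gt0 Hp.
  rewrite exprM Hap expr2.
  have -> : (upow s)%:M * (upow s)%:M = (upow s * upow s)%:M :> 'M[laurent]_2.
    by rewrite scalar_mxM.
  by rewrite -expr2 Hu2.
Qed.

Lemma seq_min (s : seq int) : s != [::] -> exists2 lo, lo \in s & forall i, i \in s -> lo <= i.
Proof.
elim: s => [//|k s IH] _; case: (eqVneq s [::]) => [->|Hs].
  by exists k; rewrite ?inE // => i; rewrite inE => /eqP ->.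
case: (IH Hs) => lo Hlo Hmin.
case: (boolP (k <= lo)) => Hk.
  exists k; first by rewrite inE eqxx.
  move=> i; rewrite inE => /orP [/eqP ->//|/Hmin]; lia.
exists lo; first by rewrite inE Hlo orbT.
move=> i; rewrite inE => /orP [/eqP ->|/Hmin //]; lia.
Qed.

Lemma supp_min (v : 'cV[laurent]_2) : v != 0 ->
  exists2 lo, lo \in supp v & forall i, i \in supp v -> lo <= i.
Proof.
rewrite -supp_eq0 => H; apply: seq_min.
by apply: contraNneq H => H'; apply/eqP/fsetP => i; rewrite in_fset0 -[i \in supp v]/(i \in (supp v : seq int)) H'.
Qed.

Definition lpolys (s : seq int) : seq laurent :=
  foldr (fun k acc => acc ++ [seq f + << (1 : 'F_2) *g k >> | f <- acc]) [:: 0] s.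

Lemma lpolys_complete (s : seq int) (f : laurent) :
  (forall n, n \in msupp f -> n \in s) -> f \in lpolys s.
Proof.
elim: s f => [|k s IH] f Hf /=.
  have -> : f = 0.
    by apply/malgP => n; rewrite mcoeff0; apply: mcoeff_outdom; apply/negP => /Hf.
  by rewrite inE.
pose f' := f - << f@_k *g k >>.
have Hf' : f' \in lpolys s.
  apply: IH => n; rewrite -mcoeff_neq0 /f' mcoeffB mcoeffU.
  case: (eqVneq k n) => [->|Hkn]; first by rewrite mulr1n subrr eqxx.
  rewrite mulr0n subr0 mcoeff_neq0 => /Hf; rewrite inE => /orP [/eqP Hnk|//].
  by rewrite Hnk eqxx in Hkn.
rewrite mem_cat; case: (F2_cases f@_k) => Hk.
  by move: Hf'; rewrite /f' Hk monalgU0 subr0 => ->.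
apply/orP; right; apply/mapP; exists f'; first exact: Hf'.
by rewrite /f' Hk subrK.
Qed.

Definition col2 (f g : laurent) : 'cV[laurent]_2 := \matrix_(i, j) (if i == 0 then f else g).

Definition vlist (s : seq int) : seq 'cV[laurent]_2 :=
  [seq col2 f g | f <- lpolys s, g <- lpolys s].

Lemma vlist_complete (s : seq int) (v : 'cV[laurent]_2) :
  (forall n, n \in supp v -> n \in s) -> v \in vlist s.
Proof.
move=> H.
have -> : v = col2 (v 0 0) (v 1 0).
  apply: vec_eq; rewrite mxE; first by rewrite eqxx.
  by rewrite (_ : (1 == 0 :> 'I_2) = false).
apply: allpairs_f; apply: lpolys_complete => n Hn; apply: H; rewrite in_supp Hn ?orbT //.
Qed.

Definition rng (L : nat) : seq int := [seq Posz i | i <- iota 0 L.+1].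

Lemma in_rng L (n : int) : 0 <= n <= L%:Z -> n \in rng L.
Proof.
case: n => [m|m] H; last by move: H; lia.
apply/mapP; exists m => //; rewrite mem_iota add0n; apply/andP; split => //; lia.
Qed.

Lemma pigeon (T : eqType) (l : seq T) (f : nat -> T) : (forall n, f n \in l) ->
  exists n1 n2, (n1 < n2)%N /\ f n1 = f n2.
Proof.
move=> Hf.
have U : ~~ uniq [seq f n | n <- iota 0 (size l).+1].
  apply/negP => U.
  have := uniq_leq_size U (s2 := l).
  rewrite size_map size_iota ltnn => H; suff : false by [].
  by apply: H => x /mapP [n _ ->]; exact: Hf.
case/(uniqPn (f 0%N)): U => i [j [Hij Hj]].
rewrite size_map size_iota in Hj.
rewrite !(nth_map 0%N) ?size_iota ?nth_iota //; last by apply: ltn_trans Hj.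
  by rewrite !add0n => E; exists i, j.
by apply: ltn_trans Hij Hj.
Qed.

Lemma transl_act (a : 'M[laurent]_2) m k (v : 'cV[laurent]_2) :
  (a ^+ m) *m (upow k *: v) = upow k *: ((a ^+ m) *m v).
Proof. by rewrite scalemxAr. Qed.

Lemma scale_back k (v : 'cV[laurent]_2) : upow k *: (upow (- k) *: v) = v.
Proof. by rewrite scalerA -upowD addrN upow0 scale1r. Qed.

Lemma U_of_P (a : 'M[laurent]_2) (B : nat)
  (PB : forall v : 'cV[laurent]_2, v != 0 -> exists m, (B <= pauli_weight ((a ^+ m) *m v))%N)
  (L : nat) :
  exists M, forall (z : 'cV[laurent]_2) lo, z != 0 ->
    (forall i, i \in supp z -> lo <= i <= lo + L%:Z) ->
    exists2 m, (m <= M)%N & (B <= pauli_weight ((a ^+ m) *m z))%N.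
Proof.
have HL : forall l : seq 'cV[laurent]_2, exists M, forall w, w \in l -> w != 0 ->
    exists2 m, (m <= M)%N & (B <= pauli_weight ((a ^+ m) *m w))%N.
  elim => [|w l [M HM]]; first by exists 0%N.
  case: (eqVneq w 0) => Hw.
    exists M => w'; rewrite inE => /orP [/eqP -> |]; [by rewrite Hw eqxx | exact: HM].
  case: (PB w Hw) => m Hm; exists (maxn m M) => w'; rewrite inE => /orP [/eqP -> _|Hw' Hnz].
    by exists m => //; exact: leq_maxl.
  case: (HM w' Hw' Hnz) => m' Hm' H'; exists m' => //; exact: leq_trans Hm' (leq_maxr _ _).
case: (HL (vlist (rng L))) => M HM; exists M => z lo Hz Hsupp.
have Hw : upow (- lo) *: z \in vlist (rng L).
  apply: vlist_complete => n; rewrite in_supp_scale opprK => /Hsupp H; apply: in_rng; lia.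
have Hwnz : upow (- lo) *: z != 0.
  apply: contraNneq Hz => H0; by rewrite -(scale_back lo z) H0 scaler0.
case: (HM _ Hw Hwnz) => m Hm HB; exists m => //.
by rewrite transl_act weight_scale in HB.
Qed.

Import Order.TTheory Num.Theory.

Lemma card_grow (A B : {fset int}) x : A `<=` B -> x \in B -> x \notin A -> (#|` A| < #|` B|)%N.
Proof.
move=> HAB HxB HxA.
have : (#|` x |` A| <= #|` B|)%N.
  apply: fsubset_leq_card; apply/fsubsetP => y; rewrite !inE => /orP [/eqP ->//|].
  by move/(fsubsetP HAB).
by rewrite cardfsU1 HxA.
Qed.

Definition below (v : 'cV[laurent]_2) (c : int) : {fset int} := [fset i in supp v | i <= c].

Lemma in_below v c i : (i \in below v c) = (i \in supp v) && (i <= c).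
Proof. by rewrite !inE. Qed.

Lemma stepP (a : 'M[laurent]_2) (Hf : fractal a) (B : nat)
  (PB : forall v : 'cV[laurent]_2, v != 0 -> exists m, (B <= pauli_weight ((a ^+ m) *m v))%N)
  (v : 'cV[laurent]_2) (Hv : v != 0) :
  exists m, (B.+1 <= pauli_weight ((a ^+ m) *m v))%N.
Proof.
have Hd : \det a = 1 by case: Hf => [[_ H] _].
apply: NNPP => Hno.
have Hbound : forall m, (pauli_weight ((a ^+ m) *m v) <= B)%N.
  by move=> m; rewrite leqNgt; apply/negP => H; apply: Hno; exists m.
case: (mx_radius a) => r Hr.
pose x n := (a ^+ n) *m v.
have Hx0 : forall n, x n != 0.
  by move=> n; apply: contraNneq Hv => H; apply/eqP; apply: (pow_inj (m := n) Hd); exact: H.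
have Hxb : forall n m, (pauli_weight ((a ^+ m) *m x n) <= B)%N.
  by move=> n m; rewrite /x mulmxA -[a ^+ m *m a ^+ n]/(a ^+ m * a ^+ n) -exprD; exact: Hbound.
have Claim : forall j : nat, exists S : nat, forall n lo, lo \in supp (x n) ->
   (forall i, i \in supp (x n) -> lo <= i) ->
   (forall i, i \in supp (x n) -> i <= lo + S%:Z) \/
   (j.+1 <= #|` below (x n) (lo + S%:Z)|)%N.
  elim => [|j [S HS]].
    exists 0%N => n lo Hlo _; right; rewrite cardfs_gt0; apply/fset0Pn; exists lo.
    by rewrite in_below Hlo /=; lia.
  case: (U_of_P PB S) => M HM.
  exists (S + 2 * (r * M))%N => n lo Hlo Hmin.
  have HrM : forall m, (m <= M)%N -> (r * m <= r * M)%N by move=> m Hm; exact: leq_mul (leqnn r) Hm.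
  case: (HS n lo Hlo Hmin) => [Hl|Hc].
    by left => i /Hl; lia.
  case: (boolP (has (fun i => (lo + S%:Z < i) && (i <= lo + (S + 2 * (r * M))%N%:Z)) (supp (x n)))).
    case/hasP => i Hi /andP [Hi1 Hi2]; right.
    apply: leq_ltn_trans Hc (card_grow (x := i) _ _ _).
    - apply/fsubsetP => k; rewrite !in_below => /andP [-> Hk] /=; lia.
    - by rewrite in_below Hi /=.
    - by rewrite in_below Hi /= -ltNge.
  move/hasPn => Hnone.
  case: (boolP (has (fun i => lo + S%:Z < i) (supp (x n)))); last first.
    move/hasPn => Hall; left => i Hi; move: (Hall i Hi); rewrite -leNgt; lia.
  case/hasP => i0 Hi0 Hi0S; exfalso.
  have Hi0S' : lo + (S + 2 * (r * M))%N%:Z < i0.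
    by move: (Hnone i0 Hi0); rewrite Hi0S /= -ltNge.
  pose P := fun i : int => i <= lo + S%:Z.
  pose z := vres P (x n); pose rest := vres (predC P) (x n).
  have Hz : z != 0.
    by rewrite -supp_eq0; apply/fset0Pn; exists lo; rewrite in_supp_vres Hlo andbT /P; lia.
  have Hrest : rest != 0.
    by rewrite -supp_eq0; apply/fset0Pn; exists i0; rewrite in_supp_vres Hi0 andbT /= /P -ltNge.
  have Hzs : forall i, i \in supp z -> lo <= i <= lo + S%:Z.
    move=> i; rewrite in_supp_vres => /andP [Hi1 Hi2]; move: (Hmin i Hi2) Hi1; rewrite /P; lia.
  case: (HM z lo Hz Hzs) => m Hm HB.
  have Hdisj : forall p, p \in supp ((a ^+ m) *m z) -> p \notin supp ((a ^+ m) *m rest).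
    move=> p Hp; apply/negP => Hp'.
    case: (locm Hr Hp) => q [Hq Hqp]; case: (locm Hr Hp') => q' [Hq' Hq'p].
    move: Hq Hq'; rewrite !in_supp_vres /= /P => /andP [Hq _] /andP [Hq' Hq'2].
    have Hq'3 : lo + (S + 2 * (r * M))%N%:Z < q'.
      by move: Hq' (Hnone q' Hq'2); rewrite -ltNge => Hq'; rewrite Hq' /= -ltNge.
    move: (HrM m Hm); lia.
  have W := weight_disj Hdisj.
  have Hsum : (a ^+ m) *m z + (a ^+ m) *m rest = (a ^+ m) *m x n.
    by rewrite -mulmxDr -vres_split.
  rewrite Hsum in W.
  have Wr : (0 < pauli_weight ((a ^+ m) *m rest))%N.
    apply: weight_gt0; apply: contraNneq Hrest => H; apply/eqP; apply: (pow_inj (m := m) Hd); exact: H.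
  move: (Hxb n m) W; lia.
case: (Claim B) => S HS.
have Hspan : forall n lo, lo \in supp (x n) -> (forall i, i \in supp (x n) -> lo <= i) ->
    forall i, i \in supp (x n) -> i <= lo + S%:Z.
  move=> n lo Hlo Hmin; case: (HS n lo Hlo Hmin) => // Hc; exfalso.
  have H1 : (#|` below (x n) (lo + S%:Z)| <= pauli_weight (x n))%N.
    rewrite weightE; apply: fsubset_leq_card; apply/fsubsetP => i.
    by rewrite in_below => /andP [].
  have H2 := Hxb n 0%N; rewrite expr0 mul1mx in H2.
  by move: (leq_trans Hc (leq_trans H1 H2)); rewrite ltnn.
have Hnorm : forall n, exists wk : 'cV[laurent]_2 * int,
    (wk.1 \in vlist (rng S)) && (x n == upow wk.2 *: wk.1).
  move=> n; case: (supp_min (Hx0 n)) => lo Hlo Hmin.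
  exists (upow (- lo) *: x n, lo); apply/andP; split; last by rewrite /= scale_back; exact: eqxx.
  apply: vlist_complete => i; rewrite in_supp_scale opprK => Hi; apply: in_rng.
  move: (Hmin _ Hi) (Hspan n lo Hlo Hmin _ Hi); lia.
pose g n := xchoose (Hnorm n).
have Hg : forall n, ((g n).1 \in vlist (rng S)) && (x n == upow (g n).2 *: (g n).1).
  by move=> n; exact: (xchooseP (Hnorm n)).
case: (pigeon (l := vlist (rng S)) (f := fun n => (g n).1) _) => [n|n1 [n2 [Hlt Heq]]].
  by case/andP: (Hg n).
case/andP: (Hg n1) => _ /eqP E1; case/andP: (Hg n2) => _ /eqP E2.
move: Heq E1 E2; move: (g n1) (g n2) => [w1 k1] [w2 k2] /= Heq E1 E2.
apply: (no_return Hf (Hx0 n1) (p := (n2 - n1)%N) (s := k2 - k1)).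
  by rewrite subn_gt0.
have Hx2 : (a ^+ (n2 - n1)) *m x n1 = x n2.
  rewrite /x mulmxA.
  have -> : a ^+ (n2 - n1) *m a ^+ n1 = a ^+ (n2 - n1) * a ^+ n1 by [].
  by rewrite -exprD (subnK (ltnW Hlt)).
rewrite Hx2.
rewrite E2 E1 -Heq scalerA -upowD.
by rewrite subrK.
Qed.


Unset Implicit Arguments.
Close Scope fset_scope.

Theorem lemmaA2 (a : 'M[laurent]_2) (Hfrac : fractal a)
  (xi : 'cV[laurent]_2) (Hxi : xi != 0) :
  forall k : nat, exists m : nat, (k <= pauli_weight ((a ^+ m) *m xi))%N.
Proof.
have P : forall (B : nat) (v : 'cV[laurent]_2), v != 0 ->
    exists m : nat, (B <= pauli_weight ((a ^+ m) *m v))%N.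
  elim => [|B IH] v Hv; first by exists 0%N.
  exact: (stepP Hfrac IH Hv).
by move=> k; exact: P k xi Hxi.
Qed.
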